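(* Let $M$ be a $2$-torsion free $k$-algebra. Let $E$ be the set of idempotent anti-pre-endomorphisms of $M$, i.e. $k$-linear maps $e\colon M\to M$ with $e\circ e=e$ that are anti-pre-morphisms, and let $P$ be the set of pairs $(K,B)$ of $k$-submodules of $M$ such that $M=K\oplus B$ as $k$-modules, $xy-yx\in K$ for all $x,y\in M$, and $bb'=b'b$ for all $b,b'\in B$. Then $e\mapsto(\ker(e),e(M))$ is a bijection $E\to P$ (with inverse sending $(K,B)$ to the projection of $M=K\oplus B$ onto $B$ along $K$, viewed as an endomorphism of $M$).
   Context: $k$ is a commutative ring with identity; a $k$-algebra is a $k$-module with a $k$-bilinear, not necessarily associative, product. $M$ is $2$-torsion free if $x+x=0$ implies $x=0$. A $k$-linear map $\varphi$ is an anti-pre-morphism if $\varphi(xy)+\varphi(x)\varphi(y)=\varphi(yx)+\varphi(y)\varphi(x)$ for all $x,y$. *)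

(* Defs.v *)
From HB Require Import structures.
From mathcomp Require Import all_boot all_order all_algebra.
Set Implicit Arguments. Unset Strict Implicit. Unset Printing Implicit Defensive.
Import GRing.Theory.
Local Open Scope ring_scope.

(* A (not necessarily associative) k-algebra structure on the k-module M is a
   k-bilinear product mul : M -> M -> M. *)
Definition bilinear_product (k : comPzRingType) (M : lmodType k)
  (mul : M -> M -> M) : Prop :=
  (forall x (a : k) y z, mul x (a *: y + z) = a *: mul x y + mul x z) /\
  (forall y (a : k) x z, mul (a *: x + z) y = a *: mul x y + mul z y).

Definition two_torsion_free (k : comPzRingType) (M : lmodType k) : Prop :=
  forall x : M, x + x = 0 -> x = 0.

Definition anti_pre_morphism (k : comPzRingType) (M : lmodType k)
  (mul : M -> M -> M) (phi : M -> M) : Prop :=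
  forall x y, phi (mul x y) + mul (phi x) (phi y)
              = phi (mul y x) + mul (phi y) (phi x).

Definition idem_anti_pre_endo (k : comPzRingType) (M : lmodType k)
  (mul : M -> M -> M) (e : {linear M -> M}) : Prop :=
  (forall x, e (e x) = e x) /\ anti_pre_morphism mul e.

Definition submodule (k : comPzRingType) (M : lmodType k) (S : M -> Prop) : Prop :=
  S 0 /\ (forall x y, S x -> S y -> S (x + y)) /\
  (forall (a : k) x, S x -> S (a *: x)).

Definition direct_sum (k : comPzRingType) (M : lmodType k) (K B : M -> Prop) : Prop :=
  (forall x : M, exists a b, K a /\ B b /\ x = a + b) /\
  (forall x : M, K x -> B x -> x = 0).

Definition pair_P (k : comPzRingType) (M : lmodType k) (mul : M -> M -> M)
  (K B : M -> Prop) : Prop :=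
  [/\ submodule K, submodule B, direct_sum K B,
      (forall x y, K (mul x y - mul y x)) &
      (forall b b', B b -> B b' -> mul b b' = mul b' b)].

Definition ker_set (k : comPzRingType) (M : lmodType k) (e : M -> M) : M -> Prop :=
  fun x => e x = 0.

Definition img_set (k : comPzRingType) (M : lmodType k) (e : M -> M) : M -> Prop :=
  fun y => exists x, e x = y.

(* Main.v *)
Require Import Defs.
From HB Require Import structures.
From mathcomp Require Import all_boot all_order all_algebra.
From Stdlib Require Import ClassicalEpsilon.
Set Implicit Arguments. Unset Strict Implicit.
Import GRing.Theory.
Local Open Scope ring_scope.

Definition projB (k : comPzRingType) (M : lmodType k) (K B : M -> Prop) (x : M) : M :=
  epsilon (inhabits 0) (fun b => exists a, K a /\ B b /\ x = a + b).

Lemma projB_spec (k : comPzRingType) (M : lmodType k) (K B : M -> Prop) :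
  submodule K -> submodule B -> direct_sum K B ->
  forall x a b, K a -> B b -> x = a + b -> projB K B x = b.
Proof.
move=> [K0 [KD KZ]] [B0 [BD BZ]] [Hex Hi] x a b Ka Bb ->.
rewrite /projB.
have [a' [Ka' [Bb' E]]] : exists a', K a' /\ B (epsilon (inhabits 0)
   (fun b0 => exists a0, K a0 /\ B b0 /\ a + b = a0 + b0)) /\
   a + b = a' + epsilon (inhabits 0) (fun b0 => exists a0, K a0 /\ B b0 /\ a + b = a0 + b0).
  have := epsilon_spec (inhabits 0) (fun b0 => exists a0, K a0 /\ B b0 /\ a + b = a0 + b0).
  move=> H; have [a0 [? [? ?]]] := H (ex_intro _ b (ex_intro _ a (conj Ka (conj Bb erefl)))).
  by exists a0.
set c := epsilon _ _ in Bb' E *.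
have KN : forall z, K z -> K (- z) by move=> z /(KZ (-1)); rewrite scaleN1r.
have BN : forall z, B z -> B (- z) by move=> z /(BZ (-1)); rewrite scaleN1r.
have Ec : c = a + b - a' by rewrite E addrC addKr.
have Hd : c - b = a - a' by rewrite Ec addrAC addrK.
have : c - b = 0 by apply: Hi; [rewrite Hd; apply: KD => //; apply: KN | apply: BD => //; apply: BN].
by move/eqP; rewrite subr_eq0 => /eqP.
Qed.

Definition projL (k : comPzRingType) (M : lmodType k) (K B : M -> Prop)
  (HK : submodule K) (HB : submodule B) (HD : direct_sum K B) : M -> M := projB K B.

Lemma projL_lin (k : comPzRingType) (M : lmodType k) (K B : M -> Prop)
  (HK : submodule K) (HB : submodule B) (HD : direct_sum K B) :
  linear (projL HK HB HD).
Proof.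
move=> c x y; rewrite /projL.
have [a [b [Ka [Bb ->]]]] := HD.1 x.
have [a' [b' [Ka' [Bb' ->]]]] := HD.1 y.
have [K0 [KD KZ]] := HK; have [B0 [BD BZ]] := HB.
rewrite (projB_spec HK HB HD Ka Bb erefl) (projB_spec HK HB HD Ka' Bb' erefl).
apply: (projB_spec HK HB HD (a := c *: a + a')); [by apply: KD => //; apply: KZ | by apply: BD => //; apply: BZ|].
by rewrite scalerDr -!addrA; congr (_ + _); rewrite addrC -addrA; congr (_ + _); rewrite addrC.
Qed.

HB.instance Definition _ (k : comPzRingType) (M : lmodType k) (K B : M -> Prop)
  (HK : submodule K) (HB : submodule B) (HD : direct_sum K B) :=
  GRing.isLinear.Build k M M *:%R (projL HK HB HD) (projL_lin HK HB HD).

Theorem theorem5p3 (k : comPzRingType) (M : lmodType k) (mul : M -> M -> M)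
  (Hmul : bilinear_product mul) (H2 : two_torsion_free M) :
  (* the map e |-> (ker e, e(M)) sends E into P *)
  (forall e : {linear M -> M}, idem_anti_pre_endo mul e ->
     pair_P mul (ker_set e) (img_set e)) /\
  (* it is injective on E *)
  (forall e1 e2 : {linear M -> M},
     idem_anti_pre_endo mul e1 -> idem_anti_pre_endo mul e2 ->
     (forall x, ker_set e1 x <-> ker_set e2 x) ->
     (forall x, img_set e1 x <-> img_set e2 x) -> e1 =1 e2) /\
  (* it is surjective onto P, the preimage being the projection onto B along K *)
  (forall K B : M -> Prop, pair_P mul K B ->
     exists e : {linear M -> M}, [/\ idem_anti_pre_endo mul e,
       (forall x, ker_set e x <-> K x), (forall x, img_set e x <-> B x) &
       (forall a b, K a -> B b -> e (a + b) = b)]).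
Proof.
have [mulD1 mulD2] := Hmul.
split.
  move=> e [Hid Hap].
have Bc : forall b b', mul (e b) (e b') = mul (e b') (e b).
  move=> b b'; set u := e b; set v := e b'.
  have eu : e u = u by rewrite /u Hid. have ev : e v = v by rewrite /v Hid.
  have := Hap u v; rewrite eu ev => Hc.
  set c := mul u v - mul v u.
  have ec : e c = - c.
    rewrite /c linearB opprB.
    rewrite (_ : e (mul u v) = e (mul v u) + mul v u - mul u v); last by rewrite -Hc addrK.
    by rewrite -addrA addrC addrA subrK addrC.
  have : e (e c) = e c by rewrite Hid.
  rewrite ec linearN ec opprK => Hcc.
  have : c + c = 0 by rewrite {2}Hcc subrr.
  by move/H2/eqP; rewrite subr_eq0 => /eqP.
split.
  - split; first by rewrite /ker_set linear0.
    split; first by move=> x y; rewrite /ker_set linearD => -> ->; rewrite addr0.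
    by move=> a x; rewrite /ker_set linearZZ => ->; rewrite scaler0.
  - split; first by exists 0; rewrite linear0.
    split; first by move=> _ _ [x <-] [y <-]; exists (x + y); rewrite linearD.
    by move=> a _ [x <-]; exists (a *: x); rewrite linearZZ.
  - split; first by move=> x; exists (x - e x), (e x); split; [by rewrite /ker_set linearB Hid subrr | split; [by exists x | by rewrite subrK]].
    by move=> x Kx [y Ey]; rewrite -Ey -Hid Ey.
  - move=> x y; rewrite /ker_set linearB.
    have := Hap x y => Hxy; apply/eqP; rewrite subr_eq0; apply/eqP.
    by move: Hxy; rewrite Bc => /addIr.
  - by move=> _ _ [x <-] [y <-]; apply: Bc.
split.
  move=> e1 e2 [Hid1 _] [Hid2 _] Hk Hi x.
  have h1 : e2 (x - e1 x) = 0 by apply/Hk; rewrite /ker_set linearB Hid1 subrr.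
  have [z Ez] : img_set e2 (e1 x) by apply/Hi; exists x.
  move: h1; rewrite linearB -Ez Hid2 Ez => /eqP; rewrite subr_eq0 => /eqP ->.
  done.
move=> K B [HK HBs HD Hc Hcomm].
pose e : {linear M -> M} := projL HK HBs HD.
have spec : forall x a b, K a -> B b -> x = a + b -> e x = b.
  by move=> x a b Ka Bb Ex; apply: (projB_spec HK HBs HD Ka Bb Ex).
have [K0 [KD KZ]] := HK; have [B0 [BD BZ]] := HBs.
have eK : forall a, K a -> e a = 0 by move=> a Ka; apply: (spec _ a 0) => //; rewrite addr0.
have eB : forall b, B b -> e b = b by move=> b Bb; apply: (spec _ 0 b) => //; rewrite add0r.
have eBx : forall x, B (e x).
  move=> x; have [a [b [Ka [Bb Ex]]]] := HD.1 x; by rewrite (spec _ _ _ Ka Bb Ex).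
exists e; split.
- split; first by move=> x; apply: eB.
  move=> x y.
  have -> : e (mul x y) = e (mul x y - mul y x) + e (mul y x) by rewrite -linearD subrK.
  by rewrite eK // add0r (Hcomm _ _ (eBx x) (eBx y)).
- move=> x; split; last exact: eK.
  rewrite /ker_set => ex0.
  have [a [b [Ka [Bb Ex]]]] := HD.1 x.
  by move: ex0; rewrite (spec _ _ _ Ka Bb Ex) => Eb; rewrite Ex Eb addr0.
- move=> y; split; first by move=> [x <-].
  by move=> By; exists y; apply: eB.
- by move=> a b Ka Bb; apply: (spec _ a b).
Qed.
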